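(* Let $k\ge2$, let $U\subseteq\mathbb{R}^d$ be a set of $k$ distinct points, and let $V\subseteq U$ with $|V|\ge2$. Then $L_2'(V)\ge L_2(V)/2$.
   Context: For $V$: for each dimension $i$ let $\mathcal{I}_i$ be the consecutive intervals $[a,b]$ ($a<b$) into which $[\min_{v\in V}v_i,\max_{v\in V}v_i]$ is partitioned by the projections $\{v_i:v\in V\}$; $\mathcal{I}_{\mathrm{all}}(V)=\{(i,[a,b]):[a,b]\in\mathcal{I}_i\}$ and $L_2(V)=\sum_{(i,[a,b])\in\mathcal{I}_{\mathrm{all}}(V)}(b-a)^2$. Let $\Delta(V)=\max_{x,y\in V}\|x-y\|_2^2$. A pair $x,y\in V$ is close if $\|x-y\|_2^2<\Delta(V)/k^4$. Let $R(V)\subseteq\mathcal{I}_{\mathrm{all}}(V)$ be the set of $(i,[a,b])$ such that $[a,b]\subseteq[\min(x_i,y_i),\max(x_i,y_i)]$ for some close pair $x,y\in V$, and $L_2'(V)=\sum_{(i,[a,b])\in\mathcal{I}_{\mathrm{all}}(V)\setminus R(V)}(b-a)^2$. *)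

(* Defs.v *)
From HB Require Import structures.
From mathcomp Require Import all_boot all_order all_algebra.
From mathcomp Require Import finmap.
From mathcomp Require Import reals.
Set Implicit Arguments. Unset Strict Implicit. Unset Printing Implicit Defensive.
Import Order.TTheory GRing.Theory Num.Theory.
Local Open Scope ring_scope.
Local Open Scope fset_scope.

Section Defs.
Variables (R : realType) (d : nat).
Notation pt := 'rV[R]_d.

Definition dist2 (x y : pt) : R := \sum_(i < d) (x ord0 i - y ord0 i) ^+ 2.

Definition projs (V : {fset pt}) (i : 'I_d) : seq R :=
  sort <=%R (undup [seq (v : pt) ord0 i | v <- enum_fset V]).

Definition intervals (V : {fset pt}) (i : 'I_d) : seq (R * R) :=
  zip (projs V i) (behead (projs V i)).

Definition Delta (V : {fset pt}) : R :=
  \big[Num.max/0]_(x <- enum_fset V) \big[Num.max/0]_(y <- enum_fset V) dist2 x y.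

Definition close (k : nat) (V : {fset pt}) (x y : pt) : bool :=
  dist2 x y < Delta V / (k%:R ^+ 4).

Definition inRV (k : nat) (V : {fset pt}) (i : 'I_d) (ab : R * R) : bool :=
  has (fun x : pt => has (fun y : pt =>
      [&& x \in V, y \in V, close k V x y,
          Num.min (x ord0 i) (y ord0 i) <= ab.1 &
          ab.2 <= Num.max (x ord0 i) (y ord0 i)]) (enum_fset V)) (enum_fset V).

Definition L2 (V : {fset pt}) : R :=
  \sum_(i < d) \sum_(ab <- intervals V i) (ab.2 - ab.1) ^+ 2.

Definition L2' (k : nat) (V : {fset pt}) : R :=
  \sum_(i < d) \sum_(ab <- intervals V i | ~~ inRV k V i ab) (ab.2 - ab.1) ^+ 2.
End Defs.

(* Main.v *)
Require Import Defs.
From HB Require Import structures.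
From mathcomp Require Import all_boot all_order all_algebra.
From mathcomp Require Import finmap.
From mathcomp Require Import reals.
From mathcomp Require Import lra.
Import Order.TTheory GRing.Theory Num.Theory.
Local Open Scope ring_scope.


Section Gen.
Variable R : realType.

Lemma sum_const_seq (T : Type) (r : seq T) (c : R) :
  \sum_(x <- r) c = c *+ size r.
Proof. by elim: r => [|a r IH]; rewrite ?big_nil ?big_cons ?IH ?mulrS. Qed.

Lemma term_le_sum (T : eqType) (r : seq T) (F : T -> R) x :
  (forall y, 0 <= F y) -> x \in r -> F x <= \sum_(y <- r) F y.
Proof.
move=> F0; elim: r => [//|a r IH]; rewrite in_cons big_cons => /orP [/eqP->|xr].
  by rewrite lerDl sumr_ge0.
by rewrite (le_trans (IH xr)) // lerDr.
Qed.

Lemma CS_seq (T : Type) (r : seq T) (f : T -> R) :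
  (\sum_(a <- r) f a) ^+ 2 <= (size r)%:R * \sum_(a <- r) f a ^+ 2.
Proof.
elim: r => [|a r IH]; first by rewrite !big_nil mul0r expr0n.
rewrite !big_cons /= -[(size r).+1]addn1 natrD.
have Q0 : 0 <= \sum_(b <- r) f b ^+ 2 by apply: sumr_ge0 => b _; exact: sqr_ge0.
move: IH Q0; set S := \sum_(b <- r) f b; set Q := \sum_(b <- r) f b ^+ 2.
case: r @S @Q => [|b r] S Q IH Q0.
  rewrite /S big_nil /= add0r mul1r addr0; lra.
have n0 : 0 < (size (b :: r))%:R :> R by rewrite ltr0n.
move: n0 IH Q0; set n := (size (b :: r))%:R => n0 IH Q0.
have h : 0 <= n * (n * f a ^+ 2 - 2 * f a * S + Q).
  have := sqr_ge0 (n * f a - S); nra.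
have h2 : 0 <= n * f a ^+ 2 - 2 * f a * S + Q.
  by rewrite -(pmulr_rge0 _ n0).
nra.
Qed.

Lemma zip_le (s : seq R) : sorted <=%R s ->
  all (fun ab => ab.1 <= ab.2) (zip s (behead s)).
Proof.
elim: s => [//|x t IH]; case: t IH => [//|y t] IH /= /andP [xy pt].
by rewrite xy /=; exact: IH.
Qed.

Lemma zip_sum_ge0 (s : seq R) (F : R -> R) : sorted <=%R s ->
  (forall u, 0 <= u -> 0 <= F u) ->
  0 <= \sum_(ab <- zip s (behead s)) F (ab.2 - ab.1).
Proof.
move=> ss F0; rewrite big_seq; apply: sumr_ge0 => ab abin; apply: F0.
have := allP (zip_le s ss) ab abin; rewrite subr_ge0 //.
Qed.

Lemma span_le (s : seq R) u v : sorted <=%R s -> u \in s -> v \in s -> u <= v ->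
  v - u <= \sum_(ab <- zip s (behead s)) (ab.2 - ab.1).
Proof.
elim: s u v => [//|x t IH] u v; case: t IH => [|y t] IH.
  by rewrite !mem_seq1 => _ /eqP-> /eqP->; rewrite subrr big_nil.
move=> /= /andP [xy pt].
have st : sorted <=%R (y :: t) by exact: pt.
have ge0 := @zip_sum_ge0 _ id st (fun u h => h).
have yall : all (fun w => y <= w) (y :: t).
  by rewrite /= lexx /=; exact: (order_path_min le_trans pt).
rewrite big_cons /=.
rewrite !in_cons -!(in_cons y t).
move=> /orP [/eqP->|uin] /orP [/eqP->|vin] uv.
- by rewrite subrr addr_ge0 // subr_ge0.
- have yv := allP yall v vin.
  have := IH y v st (mem_head _ _) vin yv. lra.
- have xu : x <= u by rewrite (le_trans xy) // (allP yall u uin).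
  have : x - u <= 0 by lra.
  move=> h; apply: (le_trans h); rewrite addr_ge0 // subr_ge0 //.
- have := IH u v st uin vin uv; lra.
Qed.

Lemma gbound_aux (lo hi : R) (t : seq R) : forall x z, sorted <=%R (x :: t) ->
  z <= hi -> (z <= lo) || (z <= x) ->
  \sum_(ab <- zip (x :: t) t | (lo <= ab.1) && (ab.2 <= hi)) (ab.2 - ab.1) ^+ 2
    <= (hi - z) ^+ 2.
Proof.
elim: t => [|y t IH] x z.
  by move=> _ _ _; rewrite big_nil sqr_ge0.
move=> /= /andP [xy pt] zh zc.
have st : sorted <=%R (y :: t) by exact: pt.
rewrite big_cons /=.
case: ifP => [/andP [lx yh] | _].
  have h := IH y y st yh ltac:(by rewrite lexx orbT).
  have zx : z <= x by case/orP: zc => // zl; exact: le_trans zl lx.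
  nra.
apply: IH => //; case/orP: zc => [->//|zx]; rewrite orbC (le_trans zx xy) //.
Qed.

Lemma gbound (lo hi : R) (s : seq R) : sorted <=%R s -> lo <= hi ->
  \sum_(ab <- zip s (behead s) | (lo <= ab.1) && (ab.2 <= hi)) (ab.2 - ab.1) ^+ 2
    <= (hi - lo) ^+ 2.
Proof.
case: s => [|x t] ss lh; first by rewrite big_nil sqr_ge0.
by apply: gbound_aux => //; rewrite lexx.
Qed.

End Gen.
Arguments span_le {R}. Arguments gbound {R}. Arguments CS_seq {R T}.

Lemma le_add_ge0 (R : realType) (a b c : R) : a <= b -> 0 <= c -> a <= b + c.
Proof. lra. Qed.

Lemma double_const (R : realType) (T : Type) (r : seq T) (c : R) :
  \sum_(x <- r) \sum_(y <- r) c = c * (size r)%:R * (size r)%:R.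
Proof. by rewrite !sum_const_seq !mulr_natr. Qed.

Lemma arith (R : realType) (K n D L L' P : R) : 2 <= K -> 0 <= n -> n <= K -> 0 <= D ->
  D <= n * L -> 0 <= L -> P <= D / K ^+ 4 * n * n -> L = L' + P -> (L' + P) / 2 <= L'.
Proof.
move=> K2 n0 hn D0 DL L0 PB spl.
have K0 : 0 < K by lra.
set c := D / K ^+ 4.
have c0 : 0 <= c by rewrite divr_ge0 // exprn_ge0 // ltW.
have cK : c * K ^+ 4 = D by rewrite /c mulfVK // expf_neq0 // gt_eqF.
have h1 : P <= c * K ^+ 2.
  apply: le_trans PB _; rewrite -mulrA expr2; apply: ler_wpM2l => //.
  exact: ler_pM.
have DK : D <= K * L by apply: le_trans DL _; exact: ler_wpM2r.
have h2 : c * K ^+ 3 <= L.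
  rewrite -(ler_pM2l K0) mulrCA -exprS cK //.
have h3 : c * K ^+ 2 * 2 <= L.
  apply: le_trans h2; have -> : c * K ^+ 3 = c * K ^+ 2 * K by rewrite exprSr mulrA.
  apply: ler_wpM2l => //; by rewrite mulr_ge0 // exprn_ge0 // ltW.
rewrite -spl; lra.
Qed.

Section Main.
Variables (R : realType) (d : nat).
Notation pt := 'rV[R]_d.

Lemma projs_sorted (V : {fset pt}) i : sorted <=%R (projs V i).
Proof. by rewrite /projs; apply: sort_sorted; exact: le_total. Qed.

Lemma projs_mem (V : {fset pt}) i v : v \in V -> v ord0 i \in projs V i.
Proof. by move=> vV; rewrite /projs mem_sort mem_undup; apply: map_f. Qed.

Lemma size_intervals (V : {fset pt}) i : (size (intervals V i) <= size (enum_fset V))%N.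
Proof.
rewrite /intervals size_zip /projs size_sort.
apply: leq_trans (geq_minl _ _) _; apply: leq_trans (size_undup _) _.
by rewrite size_map.
Qed.

Lemma L2_ge0 (V : {fset pt}) : 0 <= L2 V.
Proof. by apply: sumr_ge0 => i _; apply: sumr_ge0 => ab _; exact: sqr_ge0. Qed.

Lemma dist2_ge0 (x y : pt) : 0 <= dist2 x y.
Proof. by apply: sumr_ge0 => i _; exact: sqr_ge0. Qed.

Lemma dist2_le (V : {fset pt}) x y : x \in V -> y \in V ->
  dist2 x y <= (size (enum_fset V))%:R * L2 V.
Proof.
move=> xV yV; rewrite /dist2 /L2 mulr_sumr; apply: ler_sum => i _.
set s := projs V i.
have ss : sorted <=%R s := projs_sorted V i.
have W0 : 0 <= \sum_(ab <- intervals V i) (ab.2 - ab.1) ^+ 2.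
  by apply: sumr_ge0 => ab _; exact: sqr_ge0.
have key : forall u v, u \in s -> v \in s -> u <= v ->
    (u - v) ^+ 2 <= (size (enum_fset V))%:R *
       \sum_(ab <- intervals V i) (ab.2 - ab.1) ^+ 2.
  move=> u v ui vi uv.
  have h := span_le s u v ss ui vi uv.
  have cs := CS_seq (intervals V i) (fun ab => ab.2 - ab.1).
  have hn : (size (intervals V i))%:R <= (size (enum_fset V))%:R :> R.
    by rewrite ler_nat size_intervals.
  have h1 : (u - v) ^+ 2 <= (\sum_(ab <- intervals V i) (ab.2 - ab.1)) ^+ 2.
    rewrite /intervals -/s; nra.
  apply: (le_trans h1); apply: (le_trans cs); exact: ler_wpM2r.
have xi := projs_mem V i x xV; have yi := projs_mem V i y yV.
case/orP: (le_total (x ord0 i) (y ord0 i)) => h; first exact: key.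
rewrite -sqrrN opprB; exact: key.
Qed.

Lemma Delta_ge0 (V : {fset pt}) : 0 <= Delta V.
Proof.
rewrite /Delta; apply: (big_ind (fun z : R => 0 <= z)) => // [a b ha hb|x _]; first by rewrite le_max ha.
apply: (big_ind (fun z : R => 0 <= z)) => // [a b ha hb|y _]; first by rewrite le_max ha.
exact: dist2_ge0.
Qed.

Lemma Delta_le (V : {fset pt}) : Delta V <= (size (enum_fset V))%:R * L2 V.
Proof.
have h0 : 0 <= (size (enum_fset V))%:R * L2 V by rewrite mulr_ge0 ?L2_ge0.
rewrite /Delta big_seq; apply: bigmax_le => // x xV.
rewrite big_seq; apply: bigmax_le => // y yV.
exact: dist2_le.
Qed.

Definition Rp (k : nat) (V : {fset pt}) :=
  \sum_(i < d) \sum_(ab <- intervals V i | inRV k V i ab) (ab.2 - ab.1) ^+ 2.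

Lemma Rp_i k (V : {fset pt}) i :
  \sum_(ab <- intervals V i | inRV k V i ab) (ab.2 - ab.1) ^+ 2 <=
  \sum_(x <- enum_fset V) \sum_(y <- enum_fset V)
     (if close k V x y then (x ord0 i - y ord0 i) ^+ 2 else 0).
Proof.
set E := enum_fset V.
apply: (@le_trans _ _ (\sum_(ab <- intervals V i) \sum_(x <- E) \sum_(y <- E)
   (if close k V x y && ((Num.min (x ord0 i) (y ord0 i) <= ab.1) &&
        (ab.2 <= Num.max (x ord0 i) (y ord0 i))) then (ab.2 - ab.1) ^+ 2 else 0))).
  rewrite big_mkcond /=; apply: ler_sum => ab _.
  have nn : forall x, 0 <= \sum_(y <- E)
     (if close k V x y && ((Num.min (x ord0 i) (y ord0 i) <= ab.1) &&
        (ab.2 <= Num.max (x ord0 i) (y ord0 i))) then (ab.2 - ab.1) ^+ 2 else 0).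
    by move=> x; apply: sumr_ge0 => y _; case: ifP => // _; exact: sqr_ge0.
  case: ifP => [h|_]; last by apply: sumr_ge0 => x _; move: (nn x).
  case/hasP: h => x xE /hasP [y yE /and5P [_ _ cxy h1 h2]].
  rewrite (big_rem x xE) /=; apply: le_add_ge0; last first.
    by apply: sumr_ge0 => x' _; exact: nn.
  rewrite (big_rem y yE) /=; apply: le_add_ge0; last first.
    by apply: sumr_ge0 => y' _; case: ifP => // _; exact: sqr_ge0.
  by rewrite cxy h1 h2.
rewrite exchange_big /=; apply: ler_sum => x _; rewrite exchange_big /=.
apply: ler_sum => y _.
case: (close k V x y) => /=; last by rewrite big1.
rewrite -big_mkcond /=.
have mm : Num.min (x ord0 i) (y ord0 i) <= Num.max (x ord0 i) (y ord0 i).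
  by case/orP: (le_total (x ord0 i) (y ord0 i)) => h;
    [rewrite min_l // max_r | rewrite min_r // max_l].
apply: le_trans (gbound _ _ _ (projs_sorted V i) mm) _.
case/orP: (le_total (x ord0 i) (y ord0 i)) => h.
  by rewrite min_l // max_r // -sqrrN opprB.
by rewrite min_r // max_l.
Qed.

End Main.
Arguments Rp {R d}. Arguments Rp_i {R d}. Arguments Delta_le {R d}. Arguments L2_ge0 {R d}. Arguments Delta_ge0 {R d}.

Lemma main_aux (R : realType) (d k : nat) (U V : {fset 'rV[R]_d}) :
  (2 <= k)%N -> #|` U| = k -> (V `<=` U)%fset -> (2 <= #|` V|)%N ->
  L2 V / 2 <= L2' k V.
Proof.
move=> k2 cardU VU V2.
have nk : (size (enum_fset V) <= k)%N by rewrite -cardU; exact: fsubset_leq_card.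
have spl : L2 V = L2' k V + Rp k V.
  rewrite /L2 /L2' /Rp -big_split; apply: eq_bigr => i _.
  by rewrite (bigID (inRV k V i)) /= addrC.
set E := enum_fset V.
have Rpb : Rp k V <= \sum_(x <- E) \sum_(y <- E) (Delta V / k%:R ^+ 4).
  rewrite /Rp; apply: le_trans (ler_sum _ (fun i _ => Rp_i k V i)) _.
  rewrite exchange_big; apply: ler_sum => x _; rewrite exchange_big.
  apply: ler_sum => y _.
  have -> : \sum_(i < d) (if close k V x y then (x ord0 i - y ord0 i) ^+ 2 else 0)
      = if close k V x y then dist2 x y else 0.
    by case: (close k V x y) => //; rewrite big1.
  case: ifP => [/ltW //| _].
  by rewrite divr_ge0 ?Delta_ge0 // exprn_ge0.
move: Rpb; rewrite (double_const R _ E (Delta V / k%:R ^+ 4)) => Rpb.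
have := Delta_le V; rewrite -/E => DL.
have hn : (size E)%:R <= k%:R :> R by rewrite ler_nat.
have K2 : 2 <= k%:R :> R by rewrite (ler_nat R 2).
rewrite spl; apply: (@arith R _ _ _ _ _ _ K2 (ler0n _ _) hn (Delta_ge0 V) DL (L2_ge0 V) Rpb).
by rewrite -spl.
Qed.

Local Open Scope fset_scope.
Theorem proposition4p4 (R : realType) (d k : nat) (U V : {fset 'rV[R]_d}) :
  (2 <= k)%N -> #|` U| = k -> V `<=` U -> (2 <= #|` V|)%N ->
  L2 V / 2 <= L2' k V.
Proof. exact: main_aux. Qed.
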